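(* For all integers $d\ge 2$ and $n\ge 1$, the lattice $\Gamma(M_{d,n})$, ordered pointwise ($f\le g$ iff $f(x)\le g(x)$ for all $x\in M_{d,n}$), is distributive if and only if $n\in\{1,2\}$.
   Context: For integers $d\ge 2$, $n\ge 1$, the $(d,n)$-book lattice $M_{d,n}$ is the finite lattice with universe $\{0,1\}\cup\{a_i: 1\le i\le n\}\cup\{b_j:1\le j\le d-2\}$ and order generated by $0<a_i<b_1<b_2<\cdots<b_{d-2}<1$ for each $1\le i\le n$ (the $a_i$ are pairwise incomparable; when $d=2$ there are no $b_j$ and $0<a_i<1$). For a finite lattice $L$, the geometric realization $\Gamma(L)$ is the set of functions $f\colon L\to[0,1]$ such that for every $s\in[0,1]$ the level set $f_s=\{x\in L: f(x)\ge s\}$ is a principal ideal of $L$, topologized as a subspace of $[0,1]^L$. Equivalently, writing $\phi_a$ for the indicator function of the principal ideal $\{x: x\le a\}$, $\Gamma(L)$ consists of the convex combinations $\sum_{a\in C}u_a\phi_a$ over chains $C$ of $L$. The pointwise order on $\Gamma(L)$ is a lattice order, and $\Gamma(L)$ is regarded as a lattice with the induced meet and join. The maps $h_s\colon\Gamma(L)\to L$, $h_s(f)=\bigvee f_s$ ($s\in[0,1]$) are known to be lattice homomorphisms jointly realizing $\Gamma(L)$ as a subdirect power of $L$. *)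

(* Defs.v *)
From mathcomp Require Import all_boot all_order all_algebra.
From mathcomp Require Import reals.
Set Implicit Arguments. Unset Strict Implicit. Unset Printing Implicit Defensive.
Import Order.TTheory GRing.Theory Num.Theory.
Local Open Scope ring_scope.

(* The (d,n)-book lattice M_{d,n}:
   Mbot = 0, Mtop = 1, Ma i = a_{i+1} (i : 'I_n), Mb j = b_{j+1} (j : 'I_(d-2)). *)
Inductive book (d n : nat) : Type :=
| Mbot | Mtop | Ma of 'I_n | Mb of 'I_(d - 2).
Arguments Mbot {d n}. Arguments Mtop {d n}.

Definition book_le (d n : nat) (x y : book d n) : bool :=
  match x, y with
  | Mbot, _ => true
  | _, Mtop => true
  | Ma i, Ma i' => i == i'
  | Ma _, Mb _ => true
  | Mb j, Mb j' => (j <= j')%N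
  | _, _ => false
  end.

Definition Gamma (R : realType) (d n : nat) (f : book d n -> R) : Prop :=
  (forall x, 0 <= f x <= 1) /\
  (forall s : R, 0 <= s <= 1 ->
     exists a : book d n, forall x, (s <= f x) <-> book_le x a).

Definition fle (R : realType) (T : Type) (f g : T -> R) : Prop :=
  forall x, f x <= g x.

Definition is_join (R : realType) (T : Type) (S : (T -> R) -> Prop)
  (f g j : T -> R) : Prop :=
  S j /\ fle f j /\ fle g j /\ (forall k, S k -> fle f k -> fle g k -> fle j k).

Definition is_meet (R : realType) (T : Type) (S : (T -> R) -> Prop)
  (f g m : T -> R) : Prop :=
  S m /\ fle m f /\ fle m g /\ (forall k, S k -> fle k f -> fle k g -> fle k m).

Definition distributive_lattice (R : realType) (T : Type)
  (S : (T -> R) -> Prop) : Prop :=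
  forall f g h gh l fg fh r : T -> R,
    S f -> S g -> S h ->
    is_join S g h gh -> is_meet S f gh l ->
    is_meet S f g fg -> is_meet S f h fh -> is_join S fg fh r ->
    l = r.

(* Main.v *)
Require Import Defs.
From HB Require Import structures.
From mathcomp Require Import all_boot all_order all_algebra.
From mathcomp Require Import reals.
From Stdlib Require Import FunctionalExtensionality.
From mathcomp Require Import zify.
Set Implicit Arguments. Unset Strict Implicit. Unset Printing Implicit Defensive.
Import Order.TTheory GRing.Theory Num.Theory.
Local Open Scope ring_scope.

Section Book.
Variables d n : nat.
Local Notation B := (book d n).

Definition bcode (x : B) : option (option ('I_n + 'I_(d-2))) :=
  match x with
  | Mbot => None | Mtop => Some None | Ma i => Some (Some (inl i))
  | Mb j => Some (Some (inr j)) end.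
Definition bdecode (c : option (option ('I_n + 'I_(d-2)))) : B :=
  match c with
  | None => Mbot | Some None => Mtop | Some (Some (inl i)) => @Ma d n i
  | Some (Some (inr j)) => @Mb d n j end.
Lemma bcodeK : cancel bcode bdecode. Proof. by case. Qed.
End Book.

HB.instance Definition _ (d n : nat) := Finite.copy (book d n) (can_type (@bcodeK d n)).

Section Book2.
Variables d n : nat.
Local Notation B := (book d n).
Local Notation MA := (@Ma d n).
Local Notation MB := (@Mb d n).

Definition up : B := match insub 0%N : option 'I_(d-2) with Some j => MB j | None => Mtop end.

Lemma up_le (z : B) : book_le up z = match z with Mb _ | Mtop => true | _ => false end.
Proof.
rewrite /up; case: insubP => [j _ j0|].
  by case: z => //= k; rewrite j0.
by move=> H; case: z => // k; exfalso; apply/negP: H; rewrite (leq_ltn_trans _ (ltn_ord k)).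
Qed.

Lemma a_le_up (i : 'I_n) : book_le (MA i) up.
Proof. by rewrite /up; case: insubP. Qed.

Lemma ble_refl (x : B) : book_le x x.
Proof. by case: x => //= *; rewrite leqnn. Qed.

Lemma ble_trans (x y z : B) : book_le x y -> book_le y z -> book_le x z.
Proof.
case: x => [||i|j]; case: y => [||i'|j']; case: z => [||i''|j''] //=.
- by move/eqP=> ->.
- exact: leq_trans.
Qed.

Lemma ble_anti (x y : B) : book_le x y -> book_le y x -> x = y.
Proof.
case: x; case: y => //= a b.
- by move/eqP=> -> _.
- by move=> H1 H2; congr Mb; apply: val_inj; apply/eqP; rewrite eqn_leq H1 H2.
Qed.

Definition bjoin (x y : B) : B :=
  match x, y with
  | Mbot, y => y
  | x, Mbot => x
  | Mtop, _ => Mtop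
  | _, Mtop => Mtop
  | Ma i, Ma i' => if i == i' then MA i else up
  | Ma _, Mb j => MB j
  | Mb j, Ma _ => MB j
  | Mb j, Mb j' => if (j <= j')%N then MB j' else MB j
  end.

Definition bmeet (x y : B) : B :=
  match x, y with
  | Mtop, y => y
  | x, Mtop => x
  | Mbot, _ => Mbot
  | _, Mbot => Mbot
  | Ma i, Ma i' => if i == i' then MA i else Mbot
  | Ma i, Mb _ => MA i
  | Mb _, Ma i => MA i
  | Mb j, Mb j' => if (j <= j')%N then MB j else MB j'
  end.

Lemma join_lub (x y z : B) : book_le (bjoin x y) z = book_le x z && book_le y z.
Proof.
case: x => [||i|j]; case: y => [||i'|j']; case: z => [||k|k'] //=; rewrite ?andbT ?andbF //.
all: try (case: eqP => [e|ne] /=; rewrite ?up_le //; try (by rewrite e andbb);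
  try (by apply/esym/andP => -[/eqP e1 /eqP e2]; apply: ne; rewrite e1 e2)).
all: try (case: leqP => h /=); rewrite //.
- by case H: (j' <= k')%N; rewrite ?andbT ?andbF // (leq_trans h H).
- case H: (j <= k')%N; rewrite ?andbT ?andbF //.
  by rewrite (leq_trans (ltnW h) H).
Qed.


Lemma meet_glb (x y z : B) : book_le z (bmeet x y) = book_le z x && book_le z y.
Proof.
case: x => [||i|j]; case: y => [||i'|j']; case: z => [||k|k'] //=; rewrite ?andbT ?andbF //.
all: try (case: eqP => [e|ne] /=; rewrite //; try (by rewrite e andbb);
  try (by apply/esym/andP => -[/eqP e1 /eqP e2]; apply: ne; rewrite -e1 -e2)).
all: try (case: leqP => h /=); rewrite //.
- by case H: (k' <= j)%N; rewrite ?andbT ?andbF // (leq_trans H h).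
- case H: (k' <= j')%N; rewrite ?andbT ?andbF //.
  by rewrite (leq_trans H (ltnW h)).
Qed.

Lemma meet_a_up (i : 'I_n) : bmeet (MA i) up = MA i.
Proof. by rewrite /up; case: insubP. Qed.

Lemma meet_b_up (j : 'I_(d-2)) : bmeet (MB j) up = up.
Proof.
rewrite /up; case: insubP => [j0 _ e|] /=.
  have -> : (j <= j0)%N = (j0 == j) by rewrite e leqn0 eq_sym -(inj_eq val_inj) e.
  by case: eqP => [->|].
by move=> H; exfalso; apply/negP: H; rewrite (leq_ltn_trans _ (ltn_ord j)).
Qed.

Ltac ordnorm := repeat match goal with
 | H : is_true (?x == ?y) |- _ => move/eqP: H => H; try subst
 | H : (?x == ?y) = false |- _ => move/negbT/eqP: H => H; let H' := fresh in
      (have H' : nat_of_ord x <> nat_of_ord y by move=> ee; apply: H; apply: ord_inj); clear H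
end.

Lemma distr (a b c : B) : (n <= 2)%N ->
  bmeet a (bjoin b c) = bjoin (bmeet a b) (bmeet a c).
Proof.
move=> n2.
have [[E H0]|[j0 [E e0]]] : (up = Mtop /\ ~~ (0 < d - 2)%N) \/ exists j0, up = MB j0 /\ nat_of_ord j0 = 0%N.
- rewrite /up; case: insubP => [j0 _ e|H]; [by right; exists j0|by left].
- case: a => [||i|j]; case: b => [||i'|j']; case: c => [||k|k'] //=; rewrite ?E /=.
  all: try have hi := ltn_ord i; try have hi' := ltn_ord i'; try have hk := ltn_ord k.
  all: try have hj := ltn_ord j; try have hj' := ltn_ord j'; try have hk' := ltn_ord k'.
  all: rewrite -?(inj_eq (@ord_inj n)) -?(inj_eq (@ord_inj (d-2))).
  all: repeat (case: ifP => /= ?).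
  all: rewrite ?E /=.
  all: repeat (rewrite -?(inj_eq (@ord_inj n)) -?(inj_eq (@ord_inj (d-2))); case: ifP => /= ?).
  all: ordnorm.
  all: try (congr (@Ma _ _ _); apply: ord_inj; lia).
  all: try (congr (@Mb _ _ _); apply: ord_inj; lia).
  all: try by [].
  all: try (exfalso; lia).
- case: a => [||i|j]; case: b => [||i'|j']; case: c => [||k|k'] //=; rewrite ?E /=.
  all: try have hi := ltn_ord i; try have hi' := ltn_ord i'; try have hk := ltn_ord k.
  all: try have hj := ltn_ord j; try have hj' := ltn_ord j'; try have hk' := ltn_ord k'.
  all: rewrite -?(inj_eq (@ord_inj n)) -?(inj_eq (@ord_inj (d-2))).
  all: repeat (case: ifP => /= ?).
  all: rewrite ?E /=.
  all: repeat (rewrite -?(inj_eq (@ord_inj n)) -?(inj_eq (@ord_inj (d-2))); case: ifP => /= ?).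
  all: ordnorm.
  all: try (congr (@Ma _ _ _); apply: ord_inj; lia).
  all: try (congr (@Mb _ _ _); apply: ord_inj; lia).
  all: try by [].
  all: try (exfalso; lia).
Qed.

End Book2.

Section Real.
Variables (R : realType) (d n : nat).
Local Notation B := (book d n).
Local Notation MA := (@Ma d n).
Local Notation MB := (@Mb d n).
Local Notation G := (@Gamma R d n).

Lemma bigmax_ge_seq (I : eqType) (r : seq I) (P : pred I) (F : I -> R) s :
  (s <= \big[Order.max/0]_(i <- r | P i) F i) <->
  (s <= 0 \/ exists i, i \in r /\ P i /\ s <= F i).
Proof.
elim: r => [|a r IH]; rewrite ?big_nil ?big_cons.
  by split; [left|case=> // [[i []]]; rewrite in_nil].
case: ifP => Pa.
  rewrite le_max; split.
    case/orP=> [h|/IH [h|[i [ir [Pi h]]]]]; first by right; exists a; rewrite mem_head.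
      by left.
    by right; exists i; rewrite in_cons ir orbT.
  case=> [h|[i [ir [Pi h]]]]; first by apply/orP; right; apply/IH; left.
  move: ir; rewrite in_cons => /orP [/eqP ei|ir]; first by rewrite -ei h.
  by apply/orP; right; apply/IH; right; exists i.
rewrite IH; split; case=> [h|[i [ir [Pi h]]]]; try by left.
  by right; exists i; rewrite in_cons ir orbT.
move: ir; rewrite in_cons => /orP [/eqP ei|ir]; first by rewrite ei Pa in Pi.
by right; exists i.
Qed.

Lemma bigmax_ge (I : finType) (P : pred I) (F : I -> R) s :
  (s <= \big[Order.max/0]_(i | P i) F i) <-> (s <= 0 \/ exists i, P i /\ s <= F i).
Proof.
rewrite bigmax_ge_seq; split.
  by case=> [h|[i [_ h]]]; [left|right; exists i].
by case=> [h|[i h]]; [left|right; exists i; rewrite mem_index_enum].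
Qed.

Definition J (p q : B -> R) (x : B) : R :=
  \big[Order.max/0]_(y : B) \big[Order.max/0]_(z : B | book_le x (bjoin y z))
     Order.min (p y) (q z).

Definition Mn (p q : B -> R) (x : B) : R := Order.min (p x) (q x).

Definition phi (a : B) (x : B) : R := if book_le x a then 1 else 0.

Lemma J_ge p q x s : s <= J p q x <->
  (s <= 0 \/ exists y z, book_le x (bjoin y z) /\ s <= p y /\ s <= q z).
Proof.
rewrite /J bigmax_ge; split.
  case=> [h|[y [_ /bigmax_ge [h|[z [hz h]]]]]]; try by left.
  by right; exists y, z; move: h; rewrite le_min => /andP [].
case=> [h|[y [z [hx [hy hz]]]]]; first by left.
right; exists y; split => //; apply/bigmax_ge; right; exists z; split => //.
by rewrite le_min hy hz.
Qed.

Lemma join_ub1 (x y : B) : book_le x (bjoin x y).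
Proof. by have := ble_refl (bjoin x y); rewrite join_lub => /andP []. Qed.
Lemma join_ub2 (x y : B) : book_le y (bjoin x y).
Proof. by have := ble_refl (bjoin x y); rewrite join_lub => /andP []. Qed.

Lemma G_bot f : G f -> f Mbot = 1.
Proof.
move=> [Bf Lf]; have [a Ha] := Lf 1 (introT andP (conj ler01 (lexx 1))).
have h1 : 1 <= f Mbot by apply/Ha.
by apply: le_anti; rewrite h1 andbT; case/andP: (Bf Mbot).
Qed.

Lemma J_level p q s ap aq : G p -> G q -> 0 <= s ->
  (forall x, s <= p x <-> book_le x ap) -> (forall x, s <= q x <-> book_le x aq) ->
  forall x, s <= J p q x <-> book_le x (bjoin ap aq).
Proof.
move=> [Bp _] [Bq _] s0 hp hq x; rewrite J_ge; split.
  case=> [s0'|[y [z [hx [hy hz]]]]].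
    have sx : s <= p x by apply: le_trans s0' _; case/andP: (Bp x).
    exact: ble_trans ((hp x).1 sx) (join_ub1 _ _).
  apply: ble_trans hx _; rewrite join_lub; apply/andP; split.
    exact: ble_trans ((hp y).1 hy) (join_ub1 _ _).
  exact: ble_trans ((hq z).1 hz) (join_ub2 _ _).
move=> h; right; exists ap, aq; split => //; split; [apply/hp/ble_refl|apply/hq/ble_refl].
Qed.

Lemma J_Gamma p q : G p -> G q -> G (J p q).
Proof.
move=> Gp Gq; split.
  move=> x; apply/andP; split; first by apply/J_ge; left.
  have := (J_ge p q x (J p q x)).1 (lexx _).
  case=> [h|[y [z [_ [h _]]]]]; apply: le_trans h _; first exact: ler01.
  by case: Gp => Bp _; case/andP: (Bp y).
move=> s hs; have [ap hp] := Gp.2 s hs; have [aq hq] := Gq.2 s hs.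
by exists (bjoin ap aq); apply: J_level => //; case/andP: hs.
Qed.

Lemma J_is_join p q : G p -> G q -> is_join G p q (J p q).
Proof.
move=> Gp Gq; split; first exact: J_Gamma.
split.
  move=> x; apply/J_ge; right; exists x, Mbot; split; first exact: join_ub1.
  split => //; rewrite (G_bot Gq); by case: Gp => Bp _; case/andP: (Bp x).
split.
  move=> x; apply/J_ge; right; exists Mbot, x; split; first exact: join_ub2.
  split => //; rewrite (G_bot Gp); by case: Gq => Bq _; case/andP: (Bq x).
move=> k Gk hpk hqk x.
have [BJ _] := J_Gamma Gp Gq.
set s := J p q x; have hs : 0 <= s <= 1 by exact: BJ.
have [ap hp] := Gp.2 s hs; have [aq hq] := Gq.2 s hs; have [ak hk] := Gk.2 s hs.
have hx := (J_level Gp Gq (proj1 (andP hs)) hp hq x).1 (lexx _).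
apply/hk; apply: ble_trans hx _; rewrite join_lub; apply/andP; split.
  by apply/hk; apply: le_trans (hpk ap); apply/hp/ble_refl.
by apply/hk; apply: le_trans (hqk aq); apply/hq/ble_refl.
Qed.

Lemma Mn_level p q s ap aq :
  (forall x, s <= p x <-> book_le x ap) -> (forall x, s <= q x <-> book_le x aq) ->
  forall x, s <= Mn p q x <-> book_le x (bmeet ap aq).
Proof.
move=> hp hq x; rewrite /Mn le_min meet_glb; split.
  by case/andP=> /hp -> /hq ->.
by case/andP=> /hp -> /hq ->.
Qed.

Lemma Mn_is_meet p q : G p -> G q -> is_meet G p q (Mn p q).
Proof.
move=> [Bp Lp] [Bq Lq]; split.
  split.
    move=> x; rewrite /Mn; case/andP: (Bp x) => p0 p1; case/andP: (Bq x) => q0 q1.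
    by rewrite le_min p0 q0 ge_min p1.
  move=> s hs; have [ap hp] := Lp s hs; have [aq hq] := Lq s hs.
  by exists (bmeet ap aq); apply: Mn_level.
split; first by move=> x; rewrite /Mn ge_min lexx.
split; first by move=> x; rewrite /Mn ge_min lexx orbT.
by move=> k _ hkp hkq x; rewrite /Mn le_min hkp hkq.
Qed.

Lemma join_uniq p q j : G p -> G q -> is_join G p q j -> j = J p q.
Proof.
move=> Gp Gq [Gj [pj [qj lubj]]]; have [GJ [pJ [qJ lubJ]]] := J_is_join Gp Gq.
apply: functional_extensionality => x; apply: le_anti; apply/andP; split.
  exact: lubj _ GJ pJ qJ x.
exact: lubJ _ Gj pj qj x.
Qed.

Lemma meet_uniq p q m : G p -> G q -> is_meet G p q m -> m = Mn p q.
Proof.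
move=> Gp Gq [Gm [mp [mq glbm]]]; have [GM [Mp [Mq glbM]]] := Mn_is_meet Gp Gq.
apply: functional_extensionality => x; apply: le_anti; apply/andP; split.
  exact: glbM _ Gm mp mq x.
exact: glbm _ GM Mp Mq x.
Qed.

Lemma dist_level f g h s af ag ah : G f -> G g -> G h -> 0 <= s ->
  (forall x, s <= f x <-> book_le x af) -> (forall x, s <= g x <-> book_le x ag) ->
  (forall x, s <= h x <-> book_le x ah) ->
  forall x, (s <= Mn f (J g h) x <-> book_le x (bmeet af (bjoin ag ah))) /\
    (s <= J (Mn f g) (Mn f h) x <-> book_le x (bjoin (bmeet af ag) (bmeet af ah))).
Proof.
move=> Gf Gg Gh s0 hf hg hh x; split.
  by apply: Mn_level => // y; apply: J_level.
apply: J_level => //.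
- by have [] := Mn_is_meet Gf Gg.
- by have [] := Mn_is_meet Gf Gh.
- by move=> y; apply: Mn_level.
- by move=> y; apply: Mn_level.
Qed.

Lemma phi_Gamma a : G (phi a).
Proof.
split.
  by move=> x; rewrite /phi; case: ifP; rewrite lexx ler01.
move=> s /andP [s0 s1]; case: (leP s 0) => hs.
  exists Mtop => x; split => [_|_]; first by case: x.
  by apply: le_trans hs _; rewrite /phi; case: ifP; rewrite ?ler01.
exists a => x; rewrite /phi; case: ifP => // _; split => // h.
by move: (lt_le_trans hs h); rewrite ltxx.
Qed.

Lemma phi_level a x : 1 <= phi a x <-> book_le x a.
Proof.
rewrite /phi; case: ifP => //; split => // h.
by move: (le_lt_trans h ltr01); rewrite ltxx.
Qed.

End Real.

Theorem mainTheorem4 (R : realType) (d n : nat) :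
  (2 <= d)%N -> (1 <= n)%N ->
  (distributive_lattice (@Gamma R d n) <-> (n = 1 \/ n = 2)%N).
Proof.
move=> d2 n1; split.
  move=> Hd; case: (leqP n 2) => hn; first by lia.
  exfalso.
  have h0 : (0 < n)%N by lia.
  have h1 : (1 < n)%N by lia.
  set i0 := Ordinal h0; set i1 := Ordinal h1; set i2 := Ordinal hn.
  pose f := phi R (@Ma d n i0); pose g := phi R (@Ma d n i1); pose h := phi R (@Ma d n i2).
  have Gf : Gamma f by apply: phi_Gamma.
  have Gg : Gamma g by apply: phi_Gamma.
  have Gh : Gamma h by apply: phi_Gamma.
  have E := Hd f g h _ _ _ _ _ Gf Gg Gh (J_is_join Gg Gh)
    (Mn_is_meet Gf (J_Gamma Gg Gh)) (Mn_is_meet Gf Gg) (Mn_is_meet Gf Gh)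
    (J_is_join (proj1 (Mn_is_meet Gf Gg)) (proj1 (Mn_is_meet Gf Gh))).
  have [L1 L2] := dist_level Gf Gg Gh ler01 (@phi_level R d n _) (@phi_level R d n _) (@phi_level R d n _) (@Ma d n i0).
  have : 1 <= Mn f (J g h) (@Ma d n i0).
    apply/L1.
    have -> : bjoin (Ma d i1) (Ma d i2) = up d n by [].
    by rewrite meet_a_up ble_refl.
  by rewrite E => /L2.
move=> H12 f g h gh l fg fh r Gf Gg Gh Jgh Ml Mfg Mfh Jr.
have n2 : (n <= 2)%N by case: H12 => ->.
have Ggh := proj1 Jgh; have Gl := proj1 Ml; have Gfg := proj1 Mfg; have Gfh := proj1 Mfh.
have Egh := join_uniq Gg Gh Jgh.
have El := meet_uniq Gf Ggh Ml.
have Efg := meet_uniq Gf Gg Mfg.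
have Efh := meet_uniq Gf Gh Mfh.
have Er := join_uniq Gfg Gfh Jr.
have Gr := proj1 Jr.
have key : forall s, 0 <= s <= 1 -> forall x, s <= l x <-> s <= r x.
  move=> s hs x.
  have [af hf] := Gf.2 s hs; have [ag hg] := Gg.2 s hs; have [ah hh] := Gh.2 s hs.
  have [L1 L2] := dist_level Gf Gg Gh (proj1 (andP hs)) hf hg hh x.
  rewrite El Egh Er Efg Efh L1 L2 distr //.
apply: functional_extensionality => x; apply: le_anti; apply/andP; split.
  by apply/(key (l x) (Gl.1 x)).
by apply/(key (r x) (Gr.1 x)).
Qed.
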